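(* Let $\alpha,\beta,\gamma\in\mathbb{Z}[i]$ satisfy $\alpha^2+i\beta^2+\gamma^2=0$, $\alpha\beta\gamma\neq0$, $\gcd(\alpha,\beta)\in U$, and suppose $\beta\equiv 0\pmod{(1+i)^2}$. Then, after multiplying $\alpha,\beta,\gamma$ by suitable units and possibly interchanging the first and third coordinates, one obtains $(X,Y,Z)$ with $X^2+iY^2=Z^2$, $X,Z\in O^I$, $Y=(1+i)^{2+a_1}p_2^{a_2}\cdots p_m^{a_m}$ (integers $a_j\ge0$, $p_j$ distinct Gaussian primes in $O^I$), $\gcd(X,Y)\in U$, $XYZ\neq 0$. Conversely, if $(X,Y,Z)$ satisfies $X^2+iY^2=Z^2$, $\gcd(X,Y)\in U$, $XYZ\ne0$, then $(X,Y,iZ)$ is a solution of $X^2+iY^2+Z^2=0$ with the same conditions.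
   Context: $\mathbb{Z}[i]$ is the ring of Gaussian integers, $U=\{1,-1,i,-i\}$ its unit group; $R(\alpha),I(\alpha)$ are real and imaginary parts. $\gcd(x,y)\in U$ means $x,y$ have no common non-unit divisor. $O=\{\alpha: R(\alpha)+I(\alpha)\equiv1\pmod 2\}$, $O^I=\{\alpha\in O: R(\alpha)\equiv 1\pmod 4\}$. *)

(* Defs.v *)
From mathcomp Require Import all_boot all_order all_algebra.
From Stdlib Require Import List.
Set Implicit Arguments. Unset Strict Implicit. Unset Printing Implicit Defensive.
Import Order.TTheory GRing.Theory Num.Theory.
Local Open Scope ring_scope.

Record gint := GI { re : int; im : int }.

Definition g0 : gint := GI 0 0.
Definition g1 : gint := GI 1 0.
Definition gi : gint := GI 0 1.
Definition gadd (x y : gint) : gint := GI (re x + re y) (im x + im y).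
Definition gopp (x : gint) : gint := GI (- re x) (- im x).
Definition gmul (x y : gint) : gint :=
  GI (re x * re y - im x * im y) (re x * im y + im x * re y).
Fixpoint gpow (x : gint) (n : nat) : gint :=
  match n with O => g1 | S k => gmul x (gpow x k) end.

Definition one_plus_i : gint := GI 1 1.

Definition gunit (x : gint) : Prop :=
  x = g1 \/ x = gopp g1 \/ x = gi \/ x = gopp gi.

Definition gdvd (d x : gint) : Prop := exists q : gint, x = gmul d q.

Definition gcd_unit (x y : gint) : Prop :=
  forall d : gint, gdvd d x -> gdvd d y -> gunit d.

Definition gprime (p : gint) : Prop :=
  p <> g0 /\ ~ gunit p /\
  forall a b : gint, p = gmul a b -> gunit a \/ gunit b.

Definition inO (x : gint) : Prop := ((re x + im x) %% 2)%Z = 1.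
Definition inOI (x : gint) : Prop := inO x /\ ((re x) %% 4)%Z = 1.

Fixpoint gprodpow (s : list (gint * nat)) : gint :=
  match s with
  | nil => g1
  | (p, a) :: s' => gmul (gpow p a) (gprodpow s')
  end.

(* Main.v *)
Require Import Defs.
From mathcomp Require Import all_boot all_order all_algebra.
From Stdlib Require Import List.
From mathcomp Require Import zify.
From Stdlib Require Import Ring Ring_theory Classical.
Import Order.TTheory GRing.Theory Num.Theory.
Local Open Scope ring_scope.

Lemma gext (x y : gint) : re x = re y -> im x = im y -> x = y.
Proof. by case: x; case: y => /= ? ? ? ? -> ->. Qed.

Definition gsub x y := gadd x (gopp y).

Lemma gring : ring_theory g0 g1 gadd gmul gsub gopp (@eq gint).
Proof.
constructor=> *; apply: gext; rewrite /gadd /gmul /gsub /gopp /=; lia.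
Qed.
Add Ring gintRing : gring.

Lemma test (a b c : gint) : gmul a (gadd b c) = gadd (gmul c a) (gmul b a).
Proof. ring. Qed.

Definition gN (x : gint) : int := re x * re x + im x * im x.

Lemma gN_mul x y : gN (gmul x y) = gN x * gN y.
Proof. rewrite /gN /gmul /=; lia. Qed.
Lemma gN_ge0 x : 0 <= gN x.
Proof. rewrite /gN; nia. Qed.
Lemma gN_eq0 x : gN x = 0 -> x = g0.
Proof.
case: x => a b; rewrite /gN /= => h.
have h1 : a * a = 0 by nia.
have h2 : b * b = 0 by nia.
apply: gext => /=; [move: h1|move: h2]; move/eqP; rewrite mulf_eq0 orbb => /eqP //.
Qed.
Lemma gN0 x : x <> g0 -> 0 < gN x.
Proof.
move=> h; have := gN_ge0 x; case: (boolP (gN x == 0)) => [/eqP /gN_eq0 //|]; lia.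
Qed.

Lemma gunit_N x : gunit x -> gN x = 1.
Proof. by case=> [->|[->|[->|->]]]. Qed.
Lemma gN_unit x : gN x = 1 -> gunit x.
Proof.
case: x => a b; rewrite /gN /gunit /= => h.
have ha : (a = 0 \/ a = 1 \/ a = -1) by nia.
have hb : (b = 0 \/ b = 1 \/ b = -1) by nia.
case: ha => [ha|[ha|ha]]; case: hb => [hb|[hb|hb]]; subst; rewrite /g1 /gi /gopp /=; 
 try (by left); try (by right; left); try (by right;right;left); try (by right;right;right); lia.
Qed.

Lemma gunit_inv u : gunit u -> exists u', gmul u u' = g1 /\ gunit u'.
Proof.
case=> [->|[->|[->|->]]].
- exists g1; split; [by apply: gext|by left].
- exists (gopp g1); split; [by apply: gext|by right;left].
- exists (gopp gi); split; [by apply: gext|by right;right;right].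
- exists gi; split; [by apply: gext|by right;right;left].
Qed.

Lemma gunit_mul u v : gunit u -> gunit v -> gunit (gmul u v).
Proof. move=> /gunit_N hu /gunit_N hv; apply: gN_unit; rewrite gN_mul hu hv; lia. Qed.

Lemma gmul_neq0 x y : x <> g0 -> y <> g0 -> gmul x y <> g0.
Proof.
move=> /gN0 hx /gN0 hy h; have := gN_mul x y; rewrite h (_ : gN g0 = 0) //; nia.
Qed.

Lemma gdvd_refl x : gdvd x x.
Proof. exists g1; ring. Qed.
Lemma gdvd_trans a b c : gdvd a b -> gdvd b c -> gdvd a c.
Proof. move=> [q ->] [r ->]; exists (gmul q r); ring. Qed.
Lemma gdvd_mulr a b c : gdvd a b -> gdvd a (gmul b c).
Proof. move=> [q ->]; exists (gmul q c); ring. Qed.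
Lemma gdvd_mull a b c : gdvd a b -> gdvd a (gmul c b).
Proof. move=> [q ->]; exists (gmul q c); ring. Qed.
Lemma gdvd_add a b c : gdvd a b -> gdvd a c -> gdvd a (gadd b c).
Proof. move=> [q ->] [r ->]; exists (gadd q r); ring. Qed.
Lemma gdvd_opp a b : gdvd a b -> gdvd a (gopp b).
Proof. move=> [q ->]; exists (gopp q); ring. Qed.
Lemma gdvd_unitl a b u : gunit u -> gdvd a (gmul u b) -> gdvd a b.
Proof.
move=> /gunit_inv [u' [hu _]] h.
have -> : b = gmul u' (gmul u b) by rewrite (_ : gmul u' (gmul u b) = gmul (gmul u u') b); [rewrite hu; ring|ring].
exact: gdvd_mull.
Qed.

Lemma gcd_unit_units a b u v : gunit u -> gunit v -> gcd_unit a b ->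
  gcd_unit (gmul u a) (gmul v b).
Proof. move=> hu hv h d h1 h2; apply: h; [exact: gdvd_unitl h1|exact: gdvd_unitl h2]. Qed.

Lemma gdvd_N d x : gdvd d x -> x <> g0 -> gN d <= gN x.
Proof.
move=> [q ->] h.
have hq : q <> g0 by move=> e; apply: h; rewrite e; apply: gext => /=; lia.
have := @gN0 q hq; have := gN_ge0 d; rewrite gN_mul; nia.
Qed.

Lemma round_ex (x n : int) : 0 < n -> exists q : int, -n <= 2 * (x - q * n) <= n.
Proof.
move=> hn; exists ((2 * x + n) %/ (2 * n))%Z.
have h1 := divz_eq (2 * x + n) (2 * n).
have h2 : (0 <= (2 * x + n) %% (2 * n))%Z by apply: modz_ge0; lia.
have h3 : ((2 * x + n) %% (2 * n) < 2 * n)%Z by apply: ltz_pmod; lia.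
move: h1 h2 h3.
set q := ((2 * x + n) %/ (2 * n))%Z; set r := ((2 * x + n) %% (2 * n))%Z.
nia.
Qed.

Definition gconj (b : gint) := GI (re b) (- im b).

Lemma gdiv a b : b <> g0 -> exists q r, a = gadd (gmul b q) r /\ gN r < gN b.
Proof.
move=> hb; have hn := @gN0 b hb; set n := gN b in hn.
set c := gmul a (gconj b).
have [q1 h1] := @round_ex (re c) n hn.
have [q2 h2] := @round_ex (im c) n hn.
set q := GI q1 q2; exists q, (gsub a (gmul b q)); split; first by rewrite /gsub; ring.
have e : gmul (gsub a (gmul b q)) (gconj b) = GI (re c - q1 * n) (im c - q2 * n).
  apply: gext; rewrite /c /n /gsub /gN /q /gmul /gadd /gopp /gconj /=; lia.
have := gN_mul (gsub a (gmul b q)) (gconj b); rewrite e.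
have -> : gN (gconj b) = n by rewrite /n /gN /=; lia.
rewrite {1}/gN /=.
have := gN_ge0 (gsub a (gmul b q)).
set r := gN _; move=> hr he.
move: h1 h2 he; set e1 := re c - q1 * n; set e2 := im c - q2 * n => h1 h2 he.
have k1 : 4 * (e1 * e1) <= n * n by nia.
have k2 : 4 * (e2 * e2) <= n * n by nia.
nia.
Qed.

Lemma bezout_aux (k : nat) : forall a b, b <> g0 -> (absz (gN b) <= k)%N ->
  exists g x y, g = gadd (gmul x a) (gmul y b) /\ gdvd g a /\ gdvd g b.
Proof.
elim: k => [|k IH] a b hb hk.
  have := @gN0 b hb; lia.
have [q [r [ha hr]]] := @gdiv a b hb.
case: (classic (r = g0)) => hr0.
  exists b, g0, g1; split; first ring.
  split; last exact: gdvd_refl.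
  exists q; rewrite ha hr0; ring.
have hk' : (absz (gN r) <= k)%N by have := gN_ge0 r; lia.
have [g [x [y [e [d1 d2]]]]] := IH b r hr0 hk'.
exists g, y, (gsub x (gmul y q)); split.
  rewrite e; have -> : r = gsub a (gmul b q) by rewrite ha /gsub; ring.
  rewrite /gsub; ring.
split => //.
rewrite ha; apply: gdvd_add => //; exact: gdvd_mulr.
Qed.

Lemma coprime_bezout a b : b <> g0 -> gcd_unit a b ->
  exists x y, gadd (gmul x a) (gmul y b) = g1.
Proof.
move=> hb hg.
have [g [x [y [e [d1 d2]]]]] := @bezout_aux (absz (gN b)) a b hb (leqnn _).
have /gunit_inv [g' [hg' _]] := hg g d1 d2.
exists (gmul g' x), (gmul g' y).
rewrite -hg' e; ring.
Qed.

Lemma even_dvd x : ~ inO x -> gdvd one_plus_i x.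
Proof.
case: x => a b; rewrite /inO /= => h.
exists (GI ((a + b) %/ 2)%Z ((b - a) %/ 2)%Z).
have e1 := divz_eq (a + b) 2; have e2 := divz_eq (b - a) 2.
have h1 : ((a + b) %% 2)%Z = 0 by lia.
have h2 : ((b - a) %% 2)%Z = 0 by lia.
apply: gext; rewrite /gmul /one_plus_i /=; lia.
Qed.

Lemma dvd_even x : gdvd one_plus_i x -> ~ inO x.
Proof. move=> [[c d] ->]; rewrite /inO /gmul /one_plus_i /=; lia. Qed.

Lemma opi_not_unit : ~ gunit one_plus_i.
Proof. move/gunit_N; rewrite /gN /one_plus_i /=; lia. Qed.

Lemma dvd_odd d m : gdvd d m -> inO m -> inO d.
Proof.
move=> hd hm; case: (classic (inO d)) => // /even_dvd h.
exfalso; exact: (@dvd_even _ (@gdvd_trans _ _ _ h hd) hm).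
Qed.

Lemma normO1 x : ((re x) %% 2)%Z = 1 -> ((im x) %% 2)%Z = 0 ->
  exists s, gunit s /\ inOI (gmul s x).
Proof.
case: x => a b /= h1 h2.
case: (boolP ((a %% 4)%Z == 1)) => /eqP h3.
  exists g1; split; first by left.
  rewrite /inOI /inO /gmul /g1 /=; lia.
exists (gopp g1); split; first by right; left.
rewrite /inOI /inO /gmul /g1 /gopp /=; lia.
Qed.

Lemma normO x : inO x -> exists s, gunit s /\ inOI (gmul s x).
Proof.
case: x => a b; rewrite /inO /= => h.
case: (boolP ((a %% 2)%Z == 1)) => /eqP ha.
  apply: normO1 => /=; lia.
have k1 : ((re (gmul gi (GI a b))) %% 2)%Z = 1 by rewrite /gmul /gi /=; lia.
have k2 : ((im (gmul gi (GI a b))) %% 2)%Z = 0 by rewrite /gmul /gi /=; lia.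
have [s [hs hx]] := @normO1 (gmul gi (GI a b)) k1 k2.
exists (gmul s gi); split; first by apply: gunit_mul => //; right; right; left.
by rewrite (_ : gmul (gmul s gi) (GI a b) = gmul s (gmul gi (GI a b))) //; ring.
Qed.

Lemma gprime_unit s p : gunit s -> gprime p -> gprime (gmul s p).
Proof.
move=> hs [hp0 [hpu hp]]; split; [|split].
- apply: gmul_neq0 => // e; move/gunit_N: hs; rewrite e /gN /=; lia.
- move/gunit_N => h; apply: hpu; apply: gN_unit.
  move: h; rewrite gN_mul (@gunit_N _ hs); lia.
- move=> a b e.
  have [s' [hs' hs'u]] := @gunit_inv _ hs.
  have : p = gmul (gmul s' a) b.
    rewrite (_ : gmul (gmul s' a) b = gmul s' (gmul a b)); last ring.
    rewrite -e (_ : gmul s' (gmul s p) = gmul (gmul s s') p); last ring.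
    rewrite hs'; ring.
  move/hp => [h|h]; last by right.
  left; have [s'' [h1 _]] := @gunit_inv _ hs'u.
  have -> : a = gmul s (gmul s' a).
    rewrite (_ : gmul s (gmul s' a) = gmul (gmul s s') a); last ring.
    rewrite hs'; ring.
  exact: gunit_mul.
Qed.

Lemma nonunit_N x : x <> g0 -> ~ gunit x -> 2 <= gN x.
Proof.
move=> h0 hu; have := @gN0 x h0; case: (boolP (gN x == 1)) => [/eqP/gN_unit//|]; lia.
Qed.

Lemma prime_div_aux (k : nat) : forall x, x <> g0 -> ~ gunit x -> (absz (gN x) <= k)%N ->
  exists p, gprime p /\ gdvd p x.
Proof.
elim: k => [|k IH] x h0 hu hk; first by have := @gN0 x h0; lia.
case: (classic (gprime x)) => hp; first by exists x; split => //; exact: gdvd_refl.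
have : exists a b, x = gmul a b /\ ~ gunit a /\ ~ gunit b.
  apply: NNPP => hn; apply: hp; split; [done|split; [done|]].
  move=> a b e; apply: NNPP => hab; apply: hn; exists a, b; split => //.
  by split => h; apply: hab; [left|right].
move=> [a [b [e [ha hb]]]].
have ha0 : a <> g0 by move=> z; apply: h0; rewrite e z; apply: gext => /=; lia.
have hb0 : b <> g0 by move=> z; apply: h0; rewrite e z; apply: gext => /=; lia.
have := @nonunit_N b hb0 hb; have := @nonunit_N a ha0 ha.
have := gN_mul a b; rewrite -e => hN h2a h2b.
have hk' : (absz (gN a) <= k)%N by nia.
have [p [hp1 hp2]] := IH a ha0 ha hk'.
exists p; split => //; apply: (@gdvd_trans _ a) => //; rewrite e; exact: gdvd_mulr (gdvd_refl a).
Qed.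

Lemma prime_div x : x <> g0 -> ~ gunit x -> exists p, gprime p /\ gdvd p x.
Proof. move=> h0 hu; exact: (@prime_div_aux (absz (gN x))). Qed.

Lemma odd_part_aux (k : nat) : forall q, q <> g0 -> (absz (gN q) <= k)%N ->
  exists a m, q = gmul (gpow one_plus_i a) m /\ inO m.
Proof.
elim: k => [|k IH] q h0 hk; first by have := @gN0 q h0; lia.
case: (classic (inO q)) => ho.
  exists 0%N, q; split => //=; ring.
have [q' e] := @even_dvd _ ho.
have h0' : q' <> g0 by move=> z; apply: h0; rewrite e z; apply: gext => /=; lia.
have hN := gN_mul one_plus_i q'; rewrite -e in hN.
have hk' : (absz (gN q') <= k)%N by have := @gN0 q' h0'; move: hN; rewrite {2}/gN /=; lia.
have [a [m [e' hm]]] := IH q' h0' hk'.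
exists a.+1, m; split => //; rewrite e e' /=; ring.
Qed.

Definition PP (x : gint) := gprime x /\ inOI x.

Lemma insert_ps p : PP p -> forall ps, NoDup (map fst ps) ->
  exists ps', NoDup (map fst ps') /\
    (forall x, In x (map fst ps') -> x = p \/ In x (map fst ps)) /\
    gprodpow ps' = gmul p (gprodpow ps).
Proof.
move=> hp; elim=> [|[p0 a] rest IH] hnd.
  exists ((p, 1%N) :: nil); split; first by constructor => //; constructor.
  split; first by move=> x /= [->|[]]; left.
  rewrite /=; ring.
case: (classic (p0 = p)) => e.
  subst p0; exists ((p, a.+1) :: rest); split => //; split.
    by move=> x /= [->|h]; [left|right;right].
  rewrite /=; ring.
have hnd' : NoDup (map fst rest) by inversion hnd.
have hni : ~ In p0 (map fst rest) by inversion hnd.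
have [ps' [h1 [h2 h3]]] := IH hnd'.
exists ((p0, a) :: ps'); split.
  constructor => // hin; case: (h2 _ hin) => // ->; exact: e.
split.
  move=> x /= [->|h]; first by right; left.
  by case: (h2 _ h) => [->|h']; [left|right; right].
rewrite /= h3; ring.
Qed.

Lemma odd_fact_aux (k : nat) : forall m, m <> g0 -> inO m -> (absz (gN m) <= k)%N ->
  exists e ps, gunit e /\ NoDup (map fst ps) /\
    (forall x, In x (map fst ps) -> PP x) /\ m = gmul e (gprodpow ps).
Proof.
elim: k => [|k IH] m h0 ho hk; first by have := @gN0 m h0; lia.
case: (classic (gunit m)) => hu.
  exists m, nil; split => //; split; first by constructor.
  split => //=; ring.
have [p [hp [q e]]] := @prime_div _ h0 hu.
have hpo : inO p by apply: (@dvd_odd p m) => //; exists q.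
have [s [hs hsp]] := @normO _ hpo.
have [s' [hs' hs'u]] := @gunit_inv _ hs.
set p' := gmul s p.
have e2 : m = gmul p' (gmul s' q).
  rewrite e /p'; rewrite (_ : gmul (gmul s p) (gmul s' q) = gmul (gmul s s') (gmul p q)); last ring.
  rewrite hs'; ring.
have hp' : gprime p' := @gprime_unit _ _ hs hp.
have hq0 : gmul s' q <> g0 by move=> z; apply: h0; rewrite e2 z; apply: gext => /=; lia.
have hqo : inO (gmul s' q) by apply: (@dvd_odd _ m) => //; exists p'; rewrite e2; ring.
have := @nonunit_N p' (proj1 hp') (proj1 (proj2 hp')).
have := gN_mul p' (gmul s' q); rewrite -e2 => hN h2.
have hk' : (absz (gN (gmul s' q)) <= k)%N by have := gN_ge0 (gmul s' q); nia.
have [ep [ps [hep [hnd [hPP hm]]]]] := IH _ hq0 hqo hk'.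
have [ps' [h1 [h2' h3]]] := @insert_ps p' (conj hp' hsp) ps hnd.
exists ep, ps'; split => //; split => //; split.
  by move=> x /h2' [->|h]; [split|apply: hPP].
rewrite e2 hm h3; ring.
Qed.

Lemma parity (a1 a2 c1 c2 w : int) : ((a1 + a2) %% 2)%Z = 1 ->
  a1 * a1 - a2 * a2 + (c1 * c1 - c2 * c2) = 4 * w ->
  ((a1 %% 2)%Z = 1 /\ (a2 %% 2)%Z = 0 /\ (c1 %% 2)%Z = 0 /\ (c2 %% 2)%Z = 1) \/
  ((a1 %% 2)%Z = 0 /\ (a2 %% 2)%Z = 1 /\ (c1 %% 2)%Z = 1 /\ (c2 %% 2)%Z = 0).
Proof.
move=> h e.
have d1 := divz_eq a1 2; have d2 := divz_eq a2 2; have d3 := divz_eq c1 2; have d4 := divz_eq c2 2.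
have m1 : (0 <= a1 %% 2 < 2)%Z by lia.
have m2 : (0 <= a2 %% 2 < 2)%Z by lia.
have m3 : (0 <= c1 %% 2 < 2)%Z by lia.
have m4 : (0 <= c2 %% 2 < 2)%Z by lia.
move: d1 d2 d3 d4 m1 m2 m3 m4 e h.
set k1 := (a1 %/ 2)%Z; set k2 := (a2 %/ 2)%Z; set k3 := (c1 %/ 2)%Z; set k4 := (c2 %/ 2)%Z.
set r1 := (a1 %% 2)%Z; set r2 := (a2 %% 2)%Z; set r3 := (c1 %% 2)%Z; set r4 := (c2 %% 2)%Z.
move=> d1 d2 d3 d4 m1 m2 m3 m4 e h.
have [E1|E1] : r1 = 0 \/ r1 = 1 by lia.
all: have [E2|E2] : r2 = 0 \/ r2 = 1 by lia.
all: have [E3|E3] : r3 = 0 \/ r3 = 1 by lia.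
all: have [E4|E4] : r4 = 0 \/ r4 = 1 by lia.
all: rewrite d1 d2 d3 d4 E1 E2 E3 E4 in e; lia.
Qed.
Lemma eqXYZ s t v a b c : gmul s s = g1 -> gmul t t = g1 ->
  gadd (gadd (gmul a a) (gmul gi (gmul b b))) (gmul c c) = g0 ->
  gadd (gmul (gmul (gmul s v) a) (gmul (gmul s v) a)) (gmul gi (gmul (gmul v b) (gmul v b)))
  = gmul (gmul (gmul (gmul t gi) v) c) (gmul (gmul (gmul t gi) v) c).
Proof.
move=> h1 h2 H.
have H' : gadd (gmul a a) (gmul gi (gmul b b)) = gopp (gmul c c).
  transitivity (gsub (gadd (gadd (gmul a a) (gmul gi (gmul b b))) (gmul c c)) (gmul c c)).
    rewrite /gsub; ring.
  rewrite H /gsub; ring.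
have hi : gmul gi gi = gopp g1 by apply: gext.
rewrite (_ : gadd _ _ = gmul (gmul v v) (gadd (gmul (gmul s s) (gmul a a)) (gmul gi (gmul b b)))); last ring.
rewrite (_ : gmul (gmul (gmul (gmul t gi) v) c) _ = gmul (gmul v v) (gmul (gmul (gmul t t) (gmul gi gi)) (gmul c c))); last ring.
rewrite h1 h2 hi (_ : gmul g1 (gmul a a) = gmul a a); last ring.
rewrite H'; ring.
Qed.

Lemma normO1s x : ((re x) %% 2)%Z = 1 -> ((im x) %% 2)%Z = 0 ->
  exists s, gmul s s = g1 /\ gunit s /\ inOI (gmul s x).
Proof.
case: x => a b /= h1 h2.
case: (boolP ((a %% 4)%Z == 1)) => /eqP h3.
  exists g1; split; first by apply: gext.
  split; first by left.
  rewrite /inOI /inO /gmul /g1 /=; lia.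
exists (gopp g1); split; first by apply: gext.
split; first by right; left.
rewrite /inOI /inO /gmul /g1 /gopp /=; lia.
Qed.

Lemma re_gi x : re (gmul gi x) = - im x.
Proof. rewrite /gmul /gi /=; lia. Qed.
Lemma im_gi x : im (gmul gi x) = re x.
Proof. rewrite /gmul /gi /=; lia. Qed.

Lemma unit_neq0 u : gunit u -> u <> g0.
Proof. move=> /gunit_N h e; move: h; rewrite e /gN /=; lia. Qed.

Lemma gcd_swap alpha beta gamma :
  gadd (gadd (gmul alpha alpha) (gmul gi (gmul beta beta))) (gmul gamma gamma) = g0 ->
  beta <> g0 -> gcd_unit alpha beta -> gcd_unit gamma beta.
Proof.
move=> H hb0 Hg.
have [x [y hxy]] := @coprime_bezout _ _ hb0 Hg.
move=> d hdc hdb; apply: Hg => //.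
have haa : gmul alpha alpha = gopp (gadd (gmul gi (gmul beta beta)) (gmul gamma gamma)).
  transitivity (gsub (gadd (gadd (gmul alpha alpha) (gmul gi (gmul beta beta))) (gmul gamma gamma)) (gadd (gmul gi (gmul beta beta)) (gmul gamma gamma))).
    rewrite /gsub; ring.
  rewrite H /gsub; ring.
have hdaa : gdvd d (gmul alpha alpha).
  rewrite haa; apply: gdvd_opp; apply: gdvd_add.
    by apply: gdvd_mull; apply: gdvd_mulr.
  exact: gdvd_mulr.
have -> : alpha = gadd (gmul x (gmul alpha alpha)) (gmul (gmul y alpha) beta).
  transitivity (gmul alpha (gadd (gmul x alpha) (gmul y beta))); first by rewrite hxy; ring.
  ring.
apply: gdvd_add; [exact: gdvd_mull|exact: gdvd_mull].
Qed.

Arguments gunit_mul {u v}. Arguments unit_neq0 {u}. Arguments gmul_neq0 {x y}.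
Arguments gcd_unit_units {a b u v}. Arguments eqXYZ {s t v a b c}.

Lemma part1 alpha beta gamma :
     gadd (gadd (gmul alpha alpha) (gmul gi (gmul beta beta))) (gmul gamma gamma) = g0 ->
     gmul (gmul alpha beta) gamma <> g0 ->
     gcd_unit alpha beta ->
     gdvd (gpow one_plus_i 2) beta ->
     exists (u v w : gint) (X Y Z : gint),
       gunit u /\ gunit v /\ gunit w /\
       ((X = gmul u alpha /\ Y = gmul v beta /\ Z = gmul w gamma) \/
        (X = gmul u gamma /\ Y = gmul v beta /\ Z = gmul w alpha)) /\
       gadd (gmul X X) (gmul gi (gmul Y Y)) = gmul Z Z /\
       inOI X /\ inOI Z /\
       (exists (a1 : nat) (ps : list (gint * nat)),
          NoDup (map fst ps) /\
          (forall pa, In pa ps -> gprime (fst pa) /\ inOI (fst pa)) /\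
          Y = gmul (gpow one_plus_i (2 + a1)) (gprodpow ps)) /\
       gcd_unit X Y /\
       gmul (gmul X Y) Z <> g0.
Proof.
move=> H Hnz Hg [q Hq].
have ha0 : alpha <> g0 by move=> e; apply: Hnz; rewrite e; apply: gext => /=; lia.
have hb0 : beta <> g0 by move=> e; apply: Hnz; rewrite e; apply: gext => /=; lia.
have hc0 : gamma <> g0 by move=> e; apply: Hnz; rewrite e; apply: gext => /=; lia.
have hq0 : q <> g0 by move=> e; apply: hb0; rewrite Hq e; apply: gext => /=; lia.
have [a1 [m [Hm hmo]]] := @odd_part_aux _ q hq0 (leqnn _).
have hm0 : m <> g0 by move=> e; apply: hq0; rewrite Hm e; apply: gext => /=; lia.
have [ep [ps [hep [hnd [hPP Hps]]]]] := @odd_fact_aux _ m hm0 hmo (leqnn _).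
have [v [hv hvu]] := @gunit_inv _ hep.
set Z2 := gmul (gpow one_plus_i a1) (gprodpow ps).
have HY : gmul v beta = gmul (gpow one_plus_i (2 + a1)) (gprodpow ps).
  rewrite Hq Hm Hps /=.
  rewrite add0n.
  transitivity (gmul (gmul ep v) (gmul one_plus_i (gmul one_plus_i (gmul (gpow one_plus_i a1) (gprodpow ps))))); first ring.
  rewrite hv; ring.
have HY2 : gmul v beta = gmul (GI 0 2) Z2.
  rewrite HY /Z2 /= add0n.
  transitivity (gmul (gmul one_plus_i one_plus_i) (gmul (gpow one_plus_i a1) (gprodpow ps))); first ring.
  by rewrite (_ : gmul one_plus_i one_plus_i = GI 0 2); last apply: gext.
have hopib : gdvd one_plus_i beta by rewrite Hq /=; exists (gmul (gmul one_plus_i g1) q); ring.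
have hao : inO alpha.
  case: (classic (inO alpha)) => // /even_dvd h.
  by case: opi_not_unit; apply: Hg.
set a' := gmul v alpha; set c' := gmul v gamma.
have ha'o : inO a'.
  case: (classic (inO a')) => // /even_dvd h.
  exfalso; exact: (@dvd_even _ (@gdvd_unitl _ _ _ hvu h) hao).
have E : gadd (gmul a' a') (gmul c' c') = gmul (GI 0 4) (gmul Z2 Z2).
  have H' : gadd (gmul alpha alpha) (gmul gamma gamma) = gopp (gmul gi (gmul beta beta)).
    transitivity (gsub (gadd (gadd (gmul alpha alpha) (gmul gi (gmul beta beta))) (gmul gamma gamma)) (gmul gi (gmul beta beta))).
      rewrite /gsub; ring.
    rewrite H /gsub; ring.
  transitivity (gmul (gmul v v) (gadd (gmul alpha alpha) (gmul gamma gamma))); first by rewrite /a' /c'; ring.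
  rewrite H'.
  transitivity (gopp (gmul gi (gmul (gmul v beta) (gmul v beta)))); first ring.
  rewrite HY2; apply: gext; rewrite /gmul /gopp /gi /=; lia.
have Ere := f_equal re E.
have Ere' : re a' * re a' - im a' * im a' + (re c' * re c' - im c' * im c') = 4 * (- im (gmul Z2 Z2)).
  by move: Ere; rewrite /gmul /gadd /=; lia.
have hpar := @parity (re a') (im a') (re c') (im c') (- im (gmul Z2 Z2)) ha'o Ere'.
have hvv : gunit v := hvu.
have Hnd : NoDup (map fst ps) := hnd.
have Hpp : forall pa, In pa ps -> gprime (fst pa) /\ inOI (fst pa).
  move=> pa hin; apply: hPP; exact: in_map.
have hgi : gunit gi by right; right; left.
have Hc := @gcd_swap _ _ _ H hb0 Hg.
have hii : gunit gi by right; right; left.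
case: hpar => [[p1 [p2 [p3 p4]]]|[p1 [p2 [p3 p4]]]].
- have [s1 [h1 [hs1 hX]]] := @normO1s a' p1 p2.
  have q1 : ((re (gmul gi c')) %% 2)%Z = 1 by rewrite ?re_gi ?im_gi; lia.
  have q2 : ((im (gmul gi c')) %% 2)%Z = 0 by rewrite ?re_gi ?im_gi; lia.
  have [s2 [h2 [hs2 hZ]]] := @normO1s _ q1 q2.
  have hu : gunit (gmul s1 v) := gunit_mul hs1 hvu.
  have hw : gunit (gmul (gmul s2 gi) v) := gunit_mul (gunit_mul hs2 hii) hvu.
  exists (gmul s1 v), v, (gmul (gmul s2 gi) v), (gmul (gmul s1 v) alpha), (gmul v beta),
    (gmul (gmul (gmul s2 gi) v) gamma).
  split => //; split => //; split => //; split; first by left.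
  split; first exact: eqXYZ.
  split; first by rewrite (_ : gmul (gmul s1 v) alpha = gmul s1 a') //; rewrite /a'; ring.
  split; first by rewrite (_ : gmul (gmul (gmul s2 gi) v) gamma = gmul s2 (gmul gi c')) //; rewrite /c'; ring.
  split; first by exists a1, ps.
  split; first exact: gcd_unit_units.
  apply: gmul_neq0; first apply: gmul_neq0.
  + exact: gmul_neq0 (unit_neq0 hu) ha0.
  + exact: gmul_neq0 (unit_neq0 hvu) hb0.
  + exact: gmul_neq0 (unit_neq0 hw) hc0.
- have [s1 [h1 [hs1 hX]]] := @normO1s c' p3 p4.
  have q1 : ((re (gmul gi a')) %% 2)%Z = 1 by rewrite ?re_gi ?im_gi; lia.
  have q2 : ((im (gmul gi a')) %% 2)%Z = 0 by rewrite ?re_gi ?im_gi; lia.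
  have [s2 [h2 [hs2 hZ]]] := @normO1s _ q1 q2.
  have hu : gunit (gmul s1 v) := gunit_mul hs1 hvu.
  have hw : gunit (gmul (gmul s2 gi) v) := gunit_mul (gunit_mul hs2 hii) hvu.
  have H2 : gadd (gadd (gmul gamma gamma) (gmul gi (gmul beta beta))) (gmul alpha alpha) = g0.
    rewrite -H; ring.
  exists (gmul s1 v), v, (gmul (gmul s2 gi) v), (gmul (gmul s1 v) gamma), (gmul v beta),
    (gmul (gmul (gmul s2 gi) v) alpha).
  split => //; split => //; split => //; split; first by right.
  split; first exact: eqXYZ.
  split; first by rewrite (_ : gmul (gmul s1 v) gamma = gmul s1 c') //; rewrite /c'; ring.
  split; first by rewrite (_ : gmul (gmul (gmul s2 gi) v) alpha = gmul s2 (gmul gi a')) //; rewrite /a'; ring.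
  split; first by exists a1, ps.
  split; first exact: gcd_unit_units.
  apply: gmul_neq0; first apply: gmul_neq0.
  + exact: gmul_neq0 (unit_neq0 hu) hc0.
  + exact: gmul_neq0 (unit_neq0 hvu) hb0.
  + exact: gmul_neq0 (unit_neq0 hw) ha0.
Qed.

Theorem theorem4p9 :
  (forall alpha beta gamma : gint,
     gadd (gadd (gmul alpha alpha) (gmul gi (gmul beta beta))) (gmul gamma gamma) = g0 ->
     gmul (gmul alpha beta) gamma <> g0 ->
     gcd_unit alpha beta ->
     gdvd (gpow one_plus_i 2) beta ->
     exists (u v w : gint) (X Y Z : gint),
       gunit u /\ gunit v /\ gunit w /\
       ((X = gmul u alpha /\ Y = gmul v beta /\ Z = gmul w gamma) \/
        (X = gmul u gamma /\ Y = gmul v beta /\ Z = gmul w alpha)) /\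
       gadd (gmul X X) (gmul gi (gmul Y Y)) = gmul Z Z /\
       inOI X /\ inOI Z /\
       (exists (a1 : nat) (ps : list (gint * nat)),
          NoDup (map fst ps) /\
          (forall pa, In pa ps -> gprime (fst pa) /\ inOI (fst pa)) /\
          Y = gmul (gpow one_plus_i (2 + a1)) (gprodpow ps)) /\
       gcd_unit X Y /\
       gmul (gmul X Y) Z <> g0)
  /\
  (forall X Y Z : gint,
     gadd (gmul X X) (gmul gi (gmul Y Y)) = gmul Z Z ->
     gcd_unit X Y ->
     gmul (gmul X Y) Z <> g0 ->
     gadd (gadd (gmul X X) (gmul gi (gmul Y Y))) (gmul (gmul gi Z) (gmul gi Z)) = g0 /\
     gcd_unit X Y /\
     gmul (gmul X Y) (gmul gi Z) <> g0).
Proof.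
split; first exact: part1.
move=> X Y Z H Hg Hnz; split; last split => //.
  rewrite H; apply: gext; rewrite /gadd /gmul /gi /=; lia.
have -> : gmul (gmul X Y) (gmul gi Z) = gmul gi (gmul (gmul X Y) Z) by ring.
apply: gmul_neq0 => // e; move: (f_equal im e); rewrite /gi /=; lia.
Qed.
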